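(* Let $N_x, N_\omega \ge 1$, $\Delta t>0$, $T = N_\omega \Delta t$, $t_j = j\Delta t$ for $j=0,\dots,N_\omega-1$, and for $k = 0,\dots,N_\omega-1$ let $\omega_k = 2\pi\big(k - N_\omega\,\Theta(k - N_\omega/2)\big)/T$, where $\Theta(s)=0$ if $s<0$ and $\Theta(s)=1$ if $s\ge 0$. Let $A\in\mathbb{C}^{N_x\times N_x}$, $q_0\in\mathbb{C}^{N_x}$, and $\hat g_0,\dots,\hat g_{N_\omega-1}\in\mathbb{C}^{N_x}$, and set $$g(t) = \frac{1}{N_\omega}\sum_{l=0}^{N_\omega-1}\hat g_l\, e^{i\omega_l t}.$$ Let $q:[0,T]\to\mathbb{C}^{N_x}$ be the solution of $\dot q = Aq + g(t)$, $q(0)=q_0$, i.e. $q(t) = e^{At}q_0 + \int_0^t e^{A(t-t')}g(t')\,dt'$. Assume that $i\omega_l I - A$ is invertible for every $l\in\{0,\dots,N_\omega-1\}$, and write $R_l = (i\omega_l I - A)^{-1}$. Fix $k\in\{0,\dots,N_\omega-1\}$ and assume that $I - e^{(A - i\omega_k I)\Delta t}$ is invertible. Then $$\hat q_k := \sum_{j=0}^{N_\omega-1} q(t_j)\,e^{-i\omega_k t_j} = R_k\hat g_k + \big(I - e^{(A - i\omega_k I)\Delta t}\big)^{-1}\big(I - e^{AT}\big)\Big(q_0 - \frac{1}{N_\omega}\sum_{l=0}^{N_\omega-1}R_l\hat g_l\Big).$$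
   Context: $I$ denotes the $N_x\times N_x$ identity matrix and $e^{M}$ the matrix exponential. Note that $\omega_k T\in 2\pi\mathbb{Z}$ for all $k$. The quantity $\hat q_k$ is the $k$-th component of the discrete Fourier transform (without normalization) of the samples $q(t_0),\dots,q(t_{N_\omega-1})$; with this convention $\hat g_l$ is the $l$-th DFT component of the samples of $g$. (In the paper this is applied with $g(t) = Bf(t) + n(q(t))$, the sum of an external forcing and a nonlinear term, both assumed to be exactly of this finite Fourier form.) *)

(* Defs.v *)
From HB Require Import structures.
From mathcomp Require Import all_boot all_order all_algebra.
From mathcomp Require Import complex.
From mathcomp Require Import all_classical all_reals all_analysis.
Set Implicit Arguments. Unset Strict Implicit. Unset Printing Implicit Defensive.
Import Order.TTheory GRing.Theory Num.Theory.
Import numFieldNormedType.Exports.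
Local Open Scope ring_scope.
Local Open Scope complex_scope.
Local Open Scope classical_set_scope.

Definition Heaviside {R : realType} (s : R) : R := if s < 0 then 0 else 1.

Definition omega {R : realType} (Nw : nat) (T : R) (k : nat) : R :=
  2 * pi * (k%:R - Nw%:R * Heaviside (k%:R - Nw%:R / 2)) / T.

Definition cexpi {R : realType} (th : R) : R[i] := cos th +i* sin th.

Definition expmx {R : realType} (n : nat) (M : 'M[R[i]]_n) : 'M[R[i]]_n :=
  let S (N : nat) : 'M[R[i]]_n := \sum_(k < N) ((k`!)%:R)^-1 *: M ^+ k in
  \matrix_(a, b)
    (lim ((fun N => complex.Re (S N a b)) @ \oo)
     +i* lim ((fun N => complex.Im (S N a b)) @ \oo)).

Definition has_cderiv {R : realType} (f : R -> R[i]) (t : R) (d : R[i]) : Prop :=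
  is_derive t 1 (fun s => complex.Re (f s)) (complex.Re d) /\
  is_derive t 1 (fun s => complex.Im (f s)) (complex.Im d).

Definition ccont_on {R : realType} (D : set R) (f : R -> R[i]) : Prop :=
  {within D, continuous (fun s => complex.Re (f s))} /\
  {within D, continuous (fun s => complex.Im (f s))}.

(* Main.v *)
Require Import Defs.
From HB Require Import structures.
From mathcomp Require Import all_boot all_order all_algebra.
From mathcomp Require Import complex.
From mathcomp Require Import all_classical all_reals all_analysis.
From mathcomp Require Import ring lra.
Import Order.TTheory GRing.Theory Num.Theory.
Import numFieldNormedType.Exports.
Local Open Scope ring_scope.
Local Open Scope complex_scope.
Local Open Scope classical_set_scope.
Local Notation cRe := (@complex.Re _).
Local Notation cIm := (@complex.Im _).
Lemma cexpiD {R : realType} (x y : R) : cexpi x * cexpi y = cexpi (x + y).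
Proof. rewrite /cexpi /= cosD sinD; simpc; by rewrite (addrC (sin x * _)). Qed.
Lemma cexpi0 {R : realType} : cexpi (0:R) = 1.
Proof. by rewrite /cexpi cos0 sin0. Qed.

Definition cpart {R : realType} (bb : bool) (z : R[i]) : R :=
  if bb then cRe z else cIm z.

Lemma cpartD {R : realType} bb (x y : R[i]) : cpart bb (x + y) = cpart bb x + cpart bb y.
Proof. by case: bb; move: x y => [a b] [c d]. Qed.
Lemma cpartN {R : realType} bb (x : R[i]) : cpart bb (- x) = - cpart bb x.
Proof. by case: bb; move: x => [a b]. Qed.
Lemma cpartB {R : realType} bb (x y : R[i]) : cpart bb (x - y) = cpart bb x - cpart bb y.
Proof. by rewrite cpartD cpartN. Qed.
Lemma cpart0 {R : realType} bb : cpart bb (0 : R[i]) = 0.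
Proof. by case: bb. Qed.
Lemma cpart_sum {R : realType} bb n (F : 'I_n -> R[i]) :
  cpart bb (\sum_(i < n) F i) = \sum_(i < n) cpart bb (F i).
Proof.
elim/big_ind2: _ => //; first exact: cpart0.
by move=> x1 x2 y1 y2 <- <-; rewrite cpartD.
Qed.
Lemma cpartRM {R : realType} bb (r : R) (z : R[i]) : cpart bb (r%:C * z) = r * cpart bb z.
Proof. by case: bb; move: z => [a b] /=; rewrite !mul0r ?subr0 ?addr0. Qed.
Lemma cpartM {R : realType} bb (x y : R[i]) :
  cpart bb (x * y) = cRe x * cpart bb y + (if bb then - cIm x else cIm x) * cpart (~~ bb) y.
Proof. by case: bb; move: x y => [a b] [c d] /=; rewrite ?mulNr. Qed.
Lemma cpart_eq {R : realType} (x y : R[i]) : (forall bb, cpart bb x = cpart bb y) -> x = y.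
Proof. by move: x y => [a b] [c d] H; have := H true; have := H false => /= -> ->. Qed.

Definition cnorm {R : realType} (z : R[i]) : R := `|cRe z| + `|cIm z|.
Lemma cnorm_ge0 {R : realType} (z : R[i]) : 0 <= cnorm z.
Proof. by rewrite /cnorm addr_ge0. Qed.
Lemma cpart_le {R : realType} bb (z : R[i]) : `|cpart bb z| <= cnorm z.
Proof. by case: bb; rewrite /cnorm /= ?lerDl ?lerDr. Qed.
Lemma cnormD {R : realType} (x y : R[i]) : cnorm (x + y) <= cnorm x + cnorm y.
Proof.
move: x y => [a b] [c d]; rewrite /cnorm /=.
have h1 := ler_normD a c; have h2 := ler_normD b d; lra.
Qed.
Lemma cnormM {R : realType} (x y : R[i]) : cnorm (x * y) <= cnorm x * cnorm y.
Proof.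
move: x y => [a b] [c d]; rewrite /cnorm /=.
have h1 := ler_normB (a * c) (b * d); have h2 := ler_normD (a * d) (b * c).
rewrite !normrM in h1 h2; nra.
Qed.
Lemma cnorm_sum {R : realType} n (F : 'I_n -> R[i]) :
  cnorm (\sum_(i < n) F i) <= \sum_(i < n) cnorm (F i).
Proof.
elim/big_ind2: _ => //; first by rewrite /cnorm /= normr0 addr0.
by move=> x1 x2 y1 y2 h1 h2; apply: le_trans (cnormD _ _) _; apply: lerD.
Qed.
Lemma cReM {R : realType} (x y : R[i]) : cRe (x * y) = cRe x * cRe y - cIm x * cIm y.
Proof. by move: x y => [a b] [c d] /=. Qed.
Lemma cImM {R : realType} (x y : R[i]) : cIm (x * y) = cRe x * cIm y + cIm x * cRe y.
Proof. by move: x y => [a b] [c d] /=. Qed.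
Lemma cReD {R : realType} (x y : R[i]) : cRe (x + y) = cRe x + cRe y.
Proof. by move: x y => [a b] [c d] /=. Qed.
Lemma cImD {R : realType} (x y : R[i]) : cIm (x + y) = cIm x + cIm y.
Proof. by move: x y => [a b] [c d] /=. Qed.
Lemma cvg_sumI {R : realType} {T : Type} (F : set_system T) {FF : Filter F} n
  (f : 'I_n -> T -> R) (l : 'I_n -> R) :
  (forall i, f i @ F --> l i) -> (fun x => \sum_(i < n) f i x) @ F --> \sum_(i < n) l i.
Proof.
elim: n f l => [|n IH] f l H.
  under eq_fun do rewrite big_ord0. rewrite big_ord0; exact: cvg_cst.
under eq_fun do rewrite big_ord_recr /=. rewrite big_ord_recr /=.
apply: cvgD; last exact: H.
exact: (IH (fun i => f (widen_ord (leqnSn n) i))).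
Qed.

Lemma cderP {R : realType} (f : R -> R[i]) (t : R) d :
  has_cderiv f t d <-> forall bb, is_derive t (1:R) (fun s => cpart bb (f s)) (cpart bb d).
Proof. by split=> [[h1 h2] []|h]//; split; [exact: (h true)|exact: (h false)]. Qed.

Lemma is_derive_ext {R : realType} {f g : R -> R} {x d d' : R} :
  is_derive x (1:R) f d -> f = g -> d = d' -> is_derive x (1:R) g d'.
Proof. by move=> H fg dd; rewrite -fg -dd. Qed.

Lemma cder_ext {R : realType} {f g : R -> R[i]} {t d d'} :
  has_cderiv f t d -> f = g -> d = d' -> has_cderiv g t d'.
Proof. by move=> H fg dd; rewrite -fg -dd. Qed.

Lemma cder_cst {R : realType} (c : R[i]) t : has_cderiv (fun _ => c) t 0.
Proof. apply/cderP => bb; rewrite cpart0; exact: is_derive_cst. Qed.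

Lemma cderD {R : realType} {f g : R -> R[i]} {t df dg} :
  has_cderiv f t df -> has_cderiv g t dg -> has_cderiv (fun s => f s + g s) t (df + dg).
Proof.
move=> /cderP hf /cderP hg; apply/cderP => bb.
apply: (is_derive_ext (is_deriveD (hf bb) (hg bb))).
- by apply/funext => s /=; rewrite cpartD.
- by rewrite cpartD.
Qed.

Lemma cderN {R : realType} {f : R -> R[i]} {t df} :
  has_cderiv f t df -> has_cderiv (fun s => - f s) t (- df).
Proof.
move=> /cderP hf; apply/cderP => bb.
apply: (is_derive_ext (is_deriveN (hf bb))).
- by apply/funext => s /=; rewrite cpartN.
- by rewrite cpartN.
Qed.

Lemma cder_sum {R : realType} {n} {f : 'I_n -> R -> R[i]} {t} {df : 'I_n -> R[i]} :
  (forall i, has_cderiv (f i) t (df i)) ->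
  has_cderiv (fun s => \sum_(i < n) f i s) t (\sum_(i < n) df i).
Proof.
elim: n f df => [|n IH] f df H.
  apply: (cder_ext (cder_cst 0 t)); [by apply/funext => s; rewrite big_ord0| by rewrite big_ord0].
refine (cder_ext (cderD (IH (fun i => f (widen_ord (leqnSn n) i)) (fun i => df (widen_ord (leqnSn n) i)) (fun i => H (widen_ord (leqnSn n) i))) (H ord_max)) _ _).
- by apply/funext => s; rewrite big_ord_recr.
- by rewrite big_ord_recr.
Qed.

Lemma cderM {R : realType} {f g : R -> R[i]} {t df dg} :
  has_cderiv f t df -> has_cderiv g t dg ->
  has_cderiv (fun s => f s * g s) t (df * g t + f t * dg).
Proof.
move=> [f1 f2] [g1 g2]; split.
- apply: (is_derive_ext (is_deriveB (is_deriveM f1 g1) (is_deriveM f2 g2))).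
  + by apply/funext => s /=; rewrite cReM.
  + rewrite cReD !cReM /= -![_ *: _]/(_ * _); ring.
- apply: (is_derive_ext (is_deriveD (is_deriveM f1 g2) (is_deriveM f2 g1))).
  + by apply/funext => s /=; rewrite cImM.
  + rewrite cImD !cImM /= -![_ *: _]/(_ * _); ring.
Qed.
Lemma ccontP {R : realType} (D : set R) (f : R -> R[i]) :
  ccont_on D f <-> forall bb, {within D, continuous (fun s => cpart bb (f s))}.
Proof. by split=> [[h1 h2] []|h]//; split; [exact: (h true)|exact: (h false)]. Qed.

Lemma ccontD {R : realType} {D : set R} {f g : R -> R[i]} :
  ccont_on D f -> ccont_on D g -> ccont_on D (fun s => f s + g s).
Proof.
move=> /ccontP hf /ccontP hg; apply/ccontP => bb.
have -> : (fun s => cpart bb (f s + g s)) = (fun s => cpart bb (f s)) + (fun s => cpart bb (g s)).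
  by apply/funext => s; rewrite cpartD.
move=> x; exact: continuousD (hf bb x) (hg bb x).
Qed.

Lemma ccontN {R : realType} {D : set R} {f : R -> R[i]} :
  ccont_on D f -> ccont_on D (fun s => - f s).
Proof.
move=> /ccontP hf; apply/ccontP => bb.
have -> : (fun s => cpart bb (- f s)) = (fun s => - cpart bb (f s)).
  by apply/funext => s; rewrite cpartN.
move=> x; exact: continuousN (hf bb x).
Qed.

Lemma ccontM {R : realType} {D : set R} {f g : R -> R[i]} :
  ccont_on D f -> ccont_on D g -> ccont_on D (fun s => f s * g s).
Proof.
move=> [f1 f2] [g1 g2]; split.
- have -> : (fun s => cRe (f s * g s)) = (fun s => cRe (f s)) \* (fun s => cRe (g s))
     - (fun s => cIm (f s)) \* (fun s => cIm (g s)).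
    by apply/funext => s; rewrite cReM.
  move=> x; exact: continuousB (continuousM (f1 x) (g1 x)) (continuousM (f2 x) (g2 x)).
- have -> : (fun s => cIm (f s * g s)) = (fun s => cRe (f s)) \* (fun s => cIm (g s))
     + (fun s => cIm (f s)) \* (fun s => cRe (g s)).
    by apply/funext => s; rewrite cImM.
  move=> x; exact: continuousD (continuousM (f1 x) (g2 x)) (continuousM (f2 x) (g1 x)).
Qed.

Lemma ccont_cst {R : realType} (D : set R) (c : R[i]) : ccont_on D (fun _ => c).
Proof. by split; apply: continuous_subspaceT; exact: cst_continuous. Qed.

Lemma ccont_sum {R : realType} {D : set R} n (f : 'I_n -> R -> R[i]) :
  (forall i, ccont_on D (f i)) -> ccont_on D (fun s => \sum_(i < n) f i s).
Proof.
elim: n f => [|n IH] f H.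
  have -> : (fun s => \sum_(i < 0) f i s) = (fun _ => 0) by apply/funext => s; rewrite big_ord0.
  exact: ccont_cst.
have -> : (fun s => \sum_(i < n.+1) f i s) =
   (fun s => \sum_(i < n) f (widen_ord (leqnSn n) i) s + f ord_max s).
  by apply/funext => s; rewrite big_ord_recr.
apply: ccontD; last exact: H.
exact: (IH (fun i => f (widen_ord (leqnSn n) i))).
Qed.

Lemma ccontW {R : realType} {D E : set R} {f : R -> R[i]} :
  E `<=` D -> ccont_on D f -> ccont_on E f.
Proof. by move=> ED [h1 h2]; split; [exact: continuous_subspaceW h1|exact: continuous_subspaceW h2]. Qed.

Lemma cder_cont {R : realType} (D : set R) (f : R -> R[i]) (df : R -> R[i]) :
  (forall s, has_cderiv f s (df s)) -> ccont_on D f.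
Proof.
move=> H; apply/ccontP => bb; apply: continuous_subspaceT => s.
have /cderP /(_ bb) [d _] := H s.
exact/differentiable_continuous/derivable1_diffP.
Qed.
Definition mder {R : realType} {m n : nat} (F : R -> 'M[R[i]]_(m, n)) (t : R)
  (D : 'M[R[i]]_(m, n)) := forall a b, has_cderiv (fun s => F s a b) t (D a b).
Definition mcont {R : realType} {m n : nat} (D : set R) (F : R -> 'M[R[i]]_(m, n)) :=
  forall a b, ccont_on D (fun s => F s a b).

Lemma mder_ext {R : realType} {m n} {F G : R -> 'M[R[i]]_(m, n)} {t D D'} :
  mder F t D -> F = G -> D = D' -> mder G t D'.
Proof. by move=> H fg dd; rewrite -fg -dd. Qed.

Lemma mder_cst {R : realType} {m n} (M : 'M[R[i]]_(m, n)) t : mder (fun _ => M) t 0.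
Proof. move=> a b; rewrite mxE; exact: cder_cst. Qed.

Lemma mderD {R : realType} {m n} {F G : R -> 'M[R[i]]_(m, n)} {t DF DG} :
  mder F t DF -> mder G t DG -> mder (fun s => F s + G s) t (DF + DG).
Proof.
move=> hF hG a b; refine (cder_ext (cderD (hF a b) (hG a b)) _ _).
  by apply/funext => s; rewrite mxE. by rewrite mxE.
Qed.

Lemma mderN {R : realType} {m n} {F : R -> 'M[R[i]]_(m, n)} {t DF} :
  mder F t DF -> mder (fun s => - F s) t (- DF).
Proof.
move=> hF a b; refine (cder_ext (cderN (hF a b)) _ _).
  by apply/funext => s; rewrite mxE. by rewrite mxE.
Qed.

Lemma mderM {R : realType} {m n p} {F : R -> 'M[R[i]]_(m, n)} {G : R -> 'M[R[i]]_(n, p)} {t DF DG} :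
  mder F t DF -> mder G t DG -> mder (fun s => F s *m G s) t (DF *m G t + F t *m DG).
Proof.
move=> hF hG a b.
refine (cder_ext (cder_sum (fun c => cderM (hF a c) (hG c b))) _ _).
  by apply/funext => s; rewrite mxE.
by rewrite !mxE -big_split.
Qed.

Lemma mderZ {R : realType} {m n} {c : R -> R[i]} {F : R -> 'M[R[i]]_(m, n)} {t dc DF} :
  has_cderiv c t dc -> mder F t DF -> mder (fun s => c s *: F s) t (dc *: F t + c t *: DF).
Proof.
move=> hc hF a b; refine (cder_ext (cderM hc (hF a b)) _ _).
  by apply/funext => s; rewrite mxE.
by rewrite !mxE.
Qed.

Lemma mcontD {R : realType} {D : set R} {m n} {F G : R -> 'M[R[i]]_(m, n)} :
  mcont D F -> mcont D G -> mcont D (fun s => F s + G s).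
Proof.
move=> hF hG a b; have -> : (fun s => (F s + G s) a b) = (fun s => F s a b + G s a b).
  by apply/funext => s; rewrite mxE.
exact: ccontD.
Qed.

Lemma mcontN {R : realType} {D : set R} {m n} {F : R -> 'M[R[i]]_(m, n)} :
  mcont D F -> mcont D (fun s => - F s).
Proof.
move=> hF a b; have -> : (fun s => (- F s) a b) = (fun s => - F s a b).
  by apply/funext => s; rewrite mxE.
exact: ccontN.
Qed.

Lemma mcontM {R : realType} {D : set R} {m n p} {F : R -> 'M[R[i]]_(m, n)} {G : R -> 'M[R[i]]_(n, p)} :
  mcont D F -> mcont D G -> mcont D (fun s => F s *m G s).
Proof.
move=> hF hG a b; have -> : (fun s => (F s *m G s) a b) = (fun s => \sum_(c < n) F s a c * G s c b).
  by apply/funext => s; rewrite mxE.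
apply: ccont_sum => c; exact: ccontM.
Qed.

Lemma mcontW {R : realType} {D E : set R} {m n} {F : R -> 'M[R[i]]_(m, n)} :
  E `<=` D -> mcont D F -> mcont E F.
Proof. by move=> ED hF a b; exact: ccontW ED (hF a b). Qed.

Lemma mder_cont {R : realType} (D : set R) {m n} (F : R -> 'M[R[i]]_(m, n)) (DF : R -> 'M[R[i]]_(m, n)) :
  (forall s, mder F s (DF s)) -> mcont D F.
Proof. move=> H a b; apply: (cder_cont D (fun s => F s a b) (fun s => DF s a b)) => s; exact: H. Qed.

Lemma mconst {R : realType} {m n} (F : R -> 'M[R[i]]_(m, n)) (a b : R) :
  a <= b -> (forall s, a < s < b -> mder F s 0) -> mcont `[a, b] F -> F b = F a.
Proof.
move=> ab hd hc; apply/matrixP => i j; apply: cpart_eq => bb.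
have := @MVT_segment R (fun s => cpart bb (F s i j)) (fun _ => 0) a b ab.
case.
- move=> x; rewrite in_itv /= => /hd /(_ i j) /cderP /(_ bb).
  by rewrite mxE cpart0.
- by have /ccontP := hc i j; apply.
move=> c _; rewrite mul0r => /eqP; rewrite subr_eq0 => /eqP.
by [].
Qed.
Definition Sx {R : realType} {n} (M : 'M[R[i]]_n) (N : nat) : 'M[R[i]]_n :=
  \sum_(k < N) ((k`!)%:R)^-1 *: M ^+ k.

Lemma expmx_part {R : realType} {n} (M : 'M[R[i]]_n) a b bb :
  cpart bb (expmx M a b) = lim ((fun N => cpart bb (Sx M N a b)) @ \oo).
Proof. by rewrite /expmx mxE; case: bb. Qed.

Definition mnorm {R : realType} {n} (X : 'M[R[i]]_n) : R :=
  \sum_(a < n) \sum_(b < n) cnorm (X a b).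

Lemma row_le_mnorm {R : realType} {n} (X : 'M[R[i]]_n) a :
  \sum_(c < n) cnorm (X a c) <= mnorm X.
Proof.
rewrite /mnorm [X in _ <= X](bigD1 a) //= lerDl; apply: sumr_ge0 => i _.
apply: sumr_ge0 => j _; exact: cnorm_ge0.
Qed.

Lemma mnorm_ge0 {R : realType} {n} (X : 'M[R[i]]_n) : 0 <= mnorm X.
Proof. apply: sumr_ge0 => i _; apply: sumr_ge0 => j _; exact: cnorm_ge0. Qed.

Lemma pow_bound {R : realType} {n} (X : 'M[R[i]]_n) k a b :
  cnorm ((X ^+ k) a b) <= mnorm X ^+ k.
Proof.
elim: k a b => [|k IH] a b.
  rewrite expr0 !mxE; case: (a == b) => /=; rewrite /cnorm /=.
  - by rewrite normr1 normr0 addr0.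
  - by rewrite normr0 addr0.
rewrite exprS -mulmxE mxE; apply: le_trans (cnorm_sum _ _) _.
apply: (@le_trans _ _ (\sum_(c < n) cnorm (X a c) * mnorm X ^+ k)).
  apply: ler_sum => c _; apply: le_trans (cnormM _ _) _.
  by apply: ler_wpM2l; [exact: cnorm_ge0|exact: IH].
rewrite -mulr_suml exprS; apply: ler_wpM2r; last exact: row_le_mnorm.
by apply: exprn_ge0; exact: mnorm_ge0.
Qed.

Definition ecoef {R : realType} {n} (X : 'M[R[i]]_n) a b bb (p k : nat) : R :=
  cpart bb ((X ^+ (k + p)) a b) / (k`!)%:R.

Lemma invfact_C {R : realType} k : ((k`!)%:R)^-1 = (((k`!)%:R)^-1 : R)%:C :> R[i].
Proof. by rewrite fmorphV rmorph_nat. Qed.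

Lemma entry_pseries {R : realType} {n} (X : 'M[R[i]]_n) a b bb p r N (F : nat -> 'M[R[i]]_n) :
  (forall k, F k = ((k`!)%:R)^-1 *: (r%:C ^+ k *: X ^+ (k + p))) ->
  cpart bb ((\sum_(k < N) F k) a b) = pseries (ecoef X a b bb p) r N.
Proof.
move=> HF; rewrite /pseries /series /= big_mkord summxE cpart_sum.
apply: eq_bigr => k _; rewrite HF !mxE invfact_C -rmorphXn mulrA -rmorphM cpartRM.
by rewrite /ecoef; ring.
Qed.

Lemma exprZ_mx {R : realType} {n} (c : R[i]) (M : 'M[R[i]]_n) k : (c *: M) ^+ k = c ^+ k *: M ^+ k.
Proof.
elim: k => [|k IH]; first by rewrite !expr0 scale1r.
by rewrite !exprS -!mulmxE IH -scalemxAl -scalemxAr scalerA.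
Qed.
Lemma ecoef_diffs {R : realType} {n} (X : 'M[R[i]]_n) a b bb p :
  pseries_diffs (ecoef X a b bb p) = ecoef X a b bb p.+1.
Proof.
apply/funext => k; rewrite /pseries_diffs /ecoef addSnnS factS natrM.
have h1 : (k.+1%:R : R) != 0 by rewrite pnatr_eq0.
have h2 : ((k`!)%:R : R) != 0 by rewrite pnatr_eq0 -lt0n fact_gt0.
by field; rewrite h2 /= addrC natr1.

Qed.

Lemma ecoef_cvg {R : realType} {n} (X : 'M[R[i]]_n) a b bb p (K : R) :
  cvgn (pseries (ecoef X a b bb p) K).
Proof.
apply: normed_cvg.
apply: (@series_le_cvg R _ ((mnorm X ^+ p) *: exp_coeff (mnorm X * `|K|))).
- by move=> k /=.
- move=> k /=; apply: mulr_ge0; first by apply: exprn_ge0; exact: mnorm_ge0.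
  by apply: exp_coeff_ge0; apply: mulr_ge0; [exact: mnorm_ge0|].
- move=> k /=; rewrite /ecoef /exp_coeff /= normrM normrX normrM normfV normr_nat.
  apply: (@le_trans _ _ (mnorm X ^+ (k + p) / (k`!)%:R * `|K| ^+ k)).
    apply: ler_wpM2r; first exact: exprn_ge0.
    apply: ler_wpM2r; first by rewrite invr_ge0.
    exact: le_trans (cpart_le _ _) (pow_bound _ _ _ _).
  change (mnorm X ^+ (k + p) / k`!%:R * `|K| ^+ k <= mnorm X ^+ p * ((mnorm X * `|K|) ^+ k / k`!%:R)).
  by rewrite exprD exprMn le_eqVlt; apply/orP; left; apply/eqP; ring.
- exact: (@is_cvg_seriesZ _ _ (mnorm X ^+ p) (is_cvg_series_exp_coeff (mnorm X * `|K|))).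
Qed.

Lemma expmx_Re {R : realType} {n} (X : 'M[R[i]]_n) a b bb (r : R) :
  cpart bb (expmx (r%:C *: X) a b) = limn (pseries (ecoef X a b bb 0) r).
Proof.
rewrite expmx_part.
have -> : (fun N => cpart bb (Sx (r%:C *: X) N a b)) = pseries (ecoef X a b bb 0) r.
  apply/funext => N; apply: (entry_pseries X a b bb 0 r N (fun k => ((k`!)%:R)^-1 *: (r%:C *: X) ^+ k)) => k /=; by rewrite exprZ_mx addn0.
by [].
Qed.

Lemma cvg_Sx {R : realType} {n} (X : 'M[R[i]]_n) a b bb (r : R) :
  (fun N => cpart bb (Sx (r%:C *: X) N a b)) @ \oo --> cpart bb (expmx (r%:C *: X) a b).
Proof.
rewrite expmx_Re; have -> : (fun N => cpart bb (Sx (r%:C *: X) N a b)) = pseries (ecoef X a b bb 0) r.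
  apply/funext => N; apply: (entry_pseries X a b bb 0 r N (fun k => ((k`!)%:R)^-1 *: (r%:C *: X) ^+ k)) => k /=; by rewrite exprZ_mx addn0.
exact: ecoef_cvg.
Qed.
Lemma cvg_mulc {R : realType} (x : R[i]) {u : nat -> R[i]} {l} :
  (forall bb, (fun N => cpart bb (u N)) @ \oo --> cpart bb l) ->
  forall bb, (fun N => cpart bb (x * u N)) @ \oo --> cpart bb (x * l).
Proof.
move=> H bb; rewrite cpartM.
have -> : (fun N => cpart bb (x * u N)) = (fun N => cRe x * cpart bb (u N) +
   (if bb then - cIm x else cIm x) * cpart (~~ bb) (u N)).
  by apply/funext => N; rewrite cpartM.
by apply: cvgD; apply: cvgM; [exact: cvg_cst|exact: H|exact: cvg_cst|exact: H].
Qed.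

Lemma cvg_mxl {R : realType} {m n p} (M : 'M[R[i]]_(m, n)) (U : nat -> 'M[R[i]]_(n, p)) (L : 'M[R[i]]_(n, p)) :
  (forall a b bb, (fun N => cpart bb (U N a b)) @ \oo --> cpart bb (L a b)) ->
  forall a b bb, (fun N => cpart bb ((M *m U N) a b)) @ \oo --> cpart bb ((M *m L) a b).
Proof.
move=> H a b bb; rewrite mxE cpart_sum.
have -> : (fun N => cpart bb ((M *m U N) a b)) =
   (fun N => \sum_(c < n) cpart bb (M a c * U N c b)).
  by apply/funext => N; rewrite mxE cpart_sum.
apply: cvg_sumI => c; apply: (@cvg_mulc R (M a c) (fun N => U N c b) (L c b)) => bb'; exact: H.
Qed.

Lemma cvg_mxr {R : realType} {m n p} (M : 'M[R[i]]_(n, p)) (U : nat -> 'M[R[i]]_(m, n)) (L : 'M[R[i]]_(m, n)) :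
  (forall a b bb, (fun N => cpart bb (U N a b)) @ \oo --> cpart bb (L a b)) ->
  forall a b bb, (fun N => cpart bb ((U N *m M) a b)) @ \oo --> cpart bb ((L *m M) a b).
Proof.
move=> H a b bb; rewrite mxE cpart_sum.
have -> : (fun N => cpart bb ((U N *m M) a b)) =
   (fun N => \sum_(c < n) cpart bb (M c b * U N a c)).
  by apply/funext => N; rewrite mxE cpart_sum; apply: eq_bigr => c _; rewrite mulrC.
apply: cvg_sumI => c; rewrite mulrC; apply: (@cvg_mulc R (M c b) (fun N => U N a c) (L a c)) => bb'; exact: H.
Qed.

Lemma XSx {R : realType} {n} (X : 'M[R[i]]_n) (r : R) N a b bb :
  cpart bb ((X *m Sx (r%:C *: X) N) a b) = pseries (ecoef X a b bb 1) r N.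
Proof.
rewrite /Sx mulmx_sumr.
apply: (entry_pseries X a b bb 1 r N (fun k => X *m (((k`!)%:R)^-1 *: (r%:C *: X) ^+ k))) => k /=.
by rewrite exprZ_mx -!scalemxAr addn1 exprS mulmxE.
Qed.

Lemma SxX {R : realType} {n} (X : 'M[R[i]]_n) (r : R) N a b bb :
  cpart bb ((Sx (r%:C *: X) N *m X) a b) = pseries (ecoef X a b bb 1) r N.
Proof.
rewrite /Sx mulmx_suml.
apply: (entry_pseries X a b bb 1 r N (fun k => (((k`!)%:R)^-1 *: (r%:C *: X) ^+ k) *m X)) => k /=.
by rewrite exprZ_mx -!scalemxAl addn1 exprSr mulmxE.
Qed.

Lemma expmx_XE {R : realType} {n} (X : 'M[R[i]]_n) (r : R) a b bb :
  cpart bb ((X *m expmx (r%:C *: X)) a b) = limn (pseries (ecoef X a b bb 1) r).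
Proof.
apply/esym/cvg_lim => //.
have <- : (fun N => cpart bb ((X *m Sx (r%:C *: X) N) a b)) = pseries (ecoef X a b bb 1) r.
  by apply/funext => N; rewrite XSx.
by apply: cvg_mxl => a' b' bb'; exact: cvg_Sx.
Qed.

Lemma expmx_EX {R : realType} {n} (X : 'M[R[i]]_n) (r : R) a b bb :
  cpart bb ((expmx (r%:C *: X) *m X) a b) = limn (pseries (ecoef X a b bb 1) r).
Proof.
apply/esym/cvg_lim => //.
have <- : (fun N => cpart bb ((Sx (r%:C *: X) N *m X) a b)) = pseries (ecoef X a b bb 1) r.
  by apply/funext => N; rewrite SxX.
by apply: cvg_mxr => a' b' bb'; exact: cvg_Sx.
Qed.

Lemma expmx_comm {R : realType} {n} (X : 'M[R[i]]_n) (r : R) :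
  X *m expmx (r%:C *: X) = expmx (r%:C *: X) *m X.
Proof.
apply/matrixP => a b; apply: cpart_eq => bb; by rewrite expmx_XE expmx_EX.
Qed.

Lemma mder_exp {R : realType} {n} (X : 'M[R[i]]_n) (a0 s : R) :
  mder (fun s => expmx ((s - a0)%:C *: X)) s (X *m expmx ((s - a0)%:C *: X)).
Proof.
move=> a b; apply/cderP => bb.
pose K : R := `|s - a0| + 1.
have C0 : cvgn (pseries (ecoef X a b bb 0) K) by exact: ecoef_cvg.
have C1 : cvgn (pseries (pseries_diffs (ecoef X a b bb 0)) K).
  by rewrite ecoef_diffs; exact: ecoef_cvg.
have C2 : cvgn (pseries (pseries_diffs (pseries_diffs (ecoef X a b bb 0))) K).
  by rewrite !ecoef_diffs; exact: ecoef_cvg.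
have H2 : `|s - a0| < `|K|.
  by rewrite [X in _ < X]ger0_norm ?addr_ge0 // ltrDl.
have H3 := @pseries_snd_diffs R (ecoef X a b bb 0) K (s - a0) C0 C1 C2 H2.
rewrite ecoef_diffs in H3.
have H4 : is_derive s (1:R) (fun s => s - a0) 1.
  exact: (is_derive_ext (is_derive_shift s 1 (- a0))).
have H5 := @is_derive1_comp _ _ (fun s => s - a0) s _ _ H3 H4.
refine (is_derive_ext H5 _ _).
  by apply/funext => s' /=; rewrite expmx_Re.
by rewrite mulr1 expmx_XE.
Qed.
Lemma expmx0 {R : realType} {n} (X : 'M[R[i]]_n) : expmx ((0 : R)%:C *: X) = 1.
Proof.
apply/matrixP => a b; apply: cpart_eq => bb.
have h1 := cvg_Sx X a b bb 0.
have h2 : (fun N => cpart bb (Sx ((0 : R)%:C *: X) N a b)) @ \oo --> cpart bb ((1 : 'M[R[i]]_n) a b).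
  apply: cvg_near_cst; exists 1%N => // N /= hN.
  case: N hN => // N _; rewrite /Sx big_ord_recl big1 ?addr0.
    by rewrite fact0 invr1 scale1r expr0.
  move=> i _; rewrite exprZ_mx.
  have -> : ((0 : R)%:C : R[i]) = 0 by [].
  by rewrite expr0n /= scale0r scaler0.
by rewrite -(cvg_lim _ h1) // -(cvg_lim _ h2).
Qed.

Lemma itv_sub {R : realType} (a b c d : R) : a <= c -> d <= b -> `[c, d] `<=` `[a, b].
Proof.
move=> ac db x /=; rewrite !in_itv /= => /andP[h1 h2]; apply/andP; split.
  exact: le_trans ac h1.
exact: le_trans h2 db.
Qed.

Lemma expmx_inv {R : realType} {n} (X : 'M[R[i]]_n) (r : R) :
  0 <= r -> expmx (r%:C *: X) *m expmx (r%:C *: (- X)) = 1.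
Proof.
move=> r0.
pose W := fun t : R => expmx ((t - 0)%:C *: X) *m expmx ((t - 0)%:C *: (- X)).
have HW : forall t, mder W t 0.
  move=> t; have H := (mderM (mder_exp X 0 t) (mder_exp (- X) 0 t)).
  apply: (mder_ext H).
    rewrite /W; reflexivity.
  have comm := expmx_comm X (t - 0).
  move: comm (expmx ((t - 0)%:C *: - X)); move: (expmx ((t - 0)%:C *: X)) => E comm E'.
  rewrite mulNmx mulmxN comm mulmxA addrN; reflexivity.
have := mconst W 0 r r0 (fun t _ => HW t) (mder_cont _ W (fun _ => 0) HW).
rewrite /W !subr0 => ->.
rewrite (expmx0 X) (expmx0 (- X)) mulmx1; reflexivity.
Qed.
Lemma ode_uniq {R : realType} {n m} (X : 'M[R[i]]_n) (Y : R -> 'M[R[i]]_(n, m)) (a0 b0 s : R) :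
  a0 <= s -> s <= b0 ->
  (forall t, a0 < t < b0 -> mder Y t (X *m Y t)) -> mcont `[a0, b0] Y ->
  Y s = expmx ((s - a0)%:C *: X) *m Y a0.
Proof.
move=> as0 sb0 hd hc.
pose Z := fun t : R => expmx ((t - a0)%:C *: (- X)) *m Y t.
have HZ : forall t, a0 < t < s -> mder Z t 0.
  move=> t /andP[h1 h2].
  have ht : a0 < t < b0 by rewrite h1 /=; exact: lt_le_trans h2 sb0.
  apply: (mder_ext (mderM (mder_exp (- X) a0 t) (hd t ht))).
    rewrite /Z; reflexivity.
  have comm := expmx_comm (- X) (t - a0).
  move: comm; move: (expmx ((t - a0)%:C *: - X)) => E comm.
  rewrite comm mulmxN mulNmx mulmxA addNr; reflexivity.
have cZ : mcont `[a0, s] Z.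
  apply: mcontM; first exact: (mder_cont _ _ _ (mder_exp (- X) a0)).
  apply: mcontW hc; exact: itv_sub.
have := mconst Z a0 s as0 HZ cZ; rewrite /Z subrr (expmx0 (- X)) mul1mx => <-.
have hi := expmx_inv X (s - a0); rewrite subr_ge0 in hi; have {}hi := hi as0.
move: hi; move: (expmx ((s - a0)%:C *: X)) (expmx ((s - a0)%:C *: - X)) => E E' hi.
rewrite mulmxA hi mul1mx; reflexivity.
Qed.
Lemma cexpi_nat {R : realType} (k : nat) : cexpi (2 * pi * k%:R : R) = 1.
Proof.
elim: k => [|k IH]; first by rewrite mulr0 cexpi0.
have -> : (2 * pi * k.+1%:R : R) = 2 * pi * k%:R + pi *+ 2 by rewrite -natr1; ring.
by move: IH; rewrite /cexpi cosD2pi sinD2pi.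
Qed.

Lemma cexpiN {R : realType} (x : R) : cexpi (- x) = (cexpi x)^-1.
Proof.
apply: (@mulIf _ (cexpi x)).
  apply/eqP => h; have := cos2Dsin2 x; move: h; rewrite /cexpi => -[-> ->].
  by rewrite expr0n /= add0r => /eqP; rewrite eq_sym oner_eq0.
rewrite cexpiD addNr cexpi0 mulVf //.
apply/eqP => h; have := cos2Dsin2 x; move: h; rewrite /cexpi => -[-> ->].
by rewrite expr0n /= add0r => /eqP; rewrite eq_sym oner_eq0.
Qed.

Lemma cexpi_int {R : realType} (z : int) : cexpi (2 * pi * z%:~R : R) = 1.
Proof.
case: z => k; first exact: cexpi_nat.
by rewrite NegzE intrN mulrN cexpiN cexpi_nat invr1.
Qed.

Lemma cexpi_pow {R : realType} (x : R) j : cexpi x ^+ j = cexpi (j%:R * x).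
Proof.
elim: j => [|j IH]; first by rewrite expr0 mul0r cexpi0.
by rewrite exprS IH cexpiD -natr1; congr cexpi; ring.
Qed.

Lemma cexpi_ne1 {R : realType} (x : R) : 0 < `|x| < pi *+ 2 -> cexpi x != 1.
Proof.
move=> /andP[h1 h2]; apply/eqP; rewrite /cexpi => -[c1 s0].
have e0 : x / 2 + x / 2 = x by field.
have e1 := cosD (x / 2) (x / 2); rewrite e0 c1 in e1.
have e2 := cos2Dsin2 (x / 2); rewrite !expr2 in e2.
have hs : sin (x / 2) * sin (x / 2) = 0 by lra.
move/eqP: hs; rewrite mulf_eq0 orbb => /eqP hs.
have hpi := pi_gt0 R.
have [xp|xn|x0] := ltgtP 0 x.
- have : 0 < sin (x / 2).
    apply: sin_gt0_pi; rewrite gtr0_norm // in h2; apply/andP; split; lra.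
  lra.
- have : 0 < sin (- (x / 2)).
    apply: sin_gt0_pi; rewrite ltr0_norm // in h2; apply/andP; split; lra.
  rewrite sinN; lra.
- by move: h1; rewrite -x0 normr0 ltxx.
Qed.

Lemma geom_sum0 {R : realType} (z : R[i]) N : z != 1 -> z ^+ N = 1 ->
  \sum_(j < N) z ^+ j = 0.
Proof.
move=> z1 zN.
have H : forall M, (1 - z) * \sum_(j < M) z ^+ j = 1 - z ^+ M.
  elim=> [|M IH]; first by rewrite big_ord0 mulr0 expr0 subrr.
  by rewrite big_ord_recr /= mulrDr IH exprSr; ring.
have := H N; rewrite zN subrr => /eqP; rewrite mulf_eq0 subr_eq0 eq_sym (negbTE z1) /=.
by move/eqP.
Qed.
Lemma cder_cexpi {R : realType} (w s : R) :
  has_cderiv (fun s => cexpi (w * s)) s ((0 +i* w) * cexpi (w * s)).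
Proof.
have H : is_derive s (1:R) (fun s => w * s) w.
  refine (is_derive_ext (is_deriveZ w (is_derive_id s (1:R))) _ _) => //.
  by rewrite /GRing.scale /= mulr1.
split.
- refine (is_derive_ext (@is_derive1_comp _ _ (fun s => w * s) s _ _ (is_derive_cos (w * s)) H) _ _) => //.
  rewrite /cexpi /=; ring.
- refine (is_derive_ext (@is_derive1_comp _ _ (fun s => w * s) s _ _ (is_derive_sin (w * s)) H) _ _) => //.
  rewrite /cexpi /=; ring.
Qed.

Definition mm {R : realType} (Nw l : nat) : R := l%:R - Nw%:R * Heaviside (l%:R - Nw%:R / 2).

Lemma mm_cases {R : realType} (Nw l : nat) : (l < Nw)%N ->
  exists z : int, (mm Nw l : R) = z%:~R /\ (mm Nw l : R) < Nw%:R / 2 /\ - (Nw%:R / 2) <= (mm Nw l : R) /\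
   ((0 <= (mm Nw l : R) /\ (mm Nw l : R) = l%:R) \/ ((mm Nw l : R) < 0 /\ (mm Nw l : R) = l%:R - Nw%:R)).
Proof.
move=> lN; have lN' : (l%:R : R) < Nw%:R by rewrite ltr_nat.
have l0 : (0 : R) <= l%:R by [].
rewrite /mm /Heaviside; case: ifP => h.
- exists l; rewrite mulr0 subr0; split => //; split; first by lra.
  split; first by lra. by left.
- move/negbT: h; rewrite -leNgt => h.
  exists (l%:Z - Nw%:Z)%R; rewrite mulr1 intrB; split => //.
  split; first by lra. split; first by lra. right; split => //; lra.
Qed.

Lemma root_sum {R : realType} (Nw : nat) (dt : R) l k : (l < Nw)%N -> (k < Nw)%N -> 0 < dt ->
  \sum_(j < Nw) cexpi (- (omega Nw (Nw%:R * dt) k * (j%:R * dt))) *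
                cexpi (omega Nw (Nw%:R * dt) l * (j%:R * dt)) = if l == k then Nw%:R else 0.
Proof.
move=> lN kN dt0.
have N0 : (Nw%:R : R) != 0 by rewrite pnatr_eq0 -lt0n; exact: leq_ltn_trans lN.
have d0 : dt != 0 by rewrite gt_eqF.
pose x : R := 2 * pi * (mm Nw l - mm Nw k) / Nw%:R.
have term : forall j : 'I_Nw, cexpi (- (omega Nw (Nw%:R * dt) k * (j%:R * dt))) *
                cexpi (omega Nw (Nw%:R * dt) l * (j%:R * dt)) = cexpi x ^+ j.
  move=> j; rewrite cexpiD cexpi_pow /x /omega -/(mm Nw l) -/(mm Nw k); congr cexpi.
  by field; apply/andP.
rewrite (eq_bigr _ (fun j _ => term j)).
have [z1 [e1 [b1 [b1' c1]]]] := @mm_cases R Nw l lN.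
have [z2 [e2 [b2 [b2' c2]]]] := @mm_cases R Nw k kN.
case: eqP => [elk|lk].
  rewrite /x elk subrr mulr0 mul0r cexpi0.
  under eq_bigr do rewrite expr1n.
  by rewrite sumr_const card_ord.
apply: geom_sum0.
- apply: cexpi_ne1.
  have dne : mm Nw l - mm Nw k != (0 : R).
    rewrite subr_eq0; apply/eqP => e; apply: lk.
    have hnat : forall a b : nat, (a%:R : R) = b%:R -> a = b by move=> a b /eqP; rewrite eqr_nat => /eqP.
    case: c1 => [[p1 q1]|[p1 q1]]; case: c2 => [[p2 q2]|[p2 q2]].
    + by apply: hnat; rewrite -q1 -q2.
    + exfalso; lra.
    + exfalso; lra.
    + by apply: hnat; apply: (@addIr _ (- Nw%:R)); rewrite -q1 -q2.
  have Nw0 : (0 : R) < Nw%:R by rewrite lt0r N0 /=.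
  have c0 : 0 < 2 * pi / (Nw%:R : R) by apply: divr_gt0 => //; apply: mulr_gt0 => //; exact: pi_gt0.
  have -> : x = 2 * pi / Nw%:R * (mm Nw l - mm Nw k) by rewrite /x; field.
  rewrite normrM (gtr0_norm c0); apply/andP; split.
    by apply: mulr_gt0 => //; rewrite normr_gt0.
  have -> : (pi *+ 2 : R) = 2 * pi / Nw%:R * Nw%:R by rewrite mulfVK // mulr_natl.
  rewrite ltr_pM2l //; rewrite ltr_norml; apply/andP; split; lra.
- rewrite cexpi_pow.
  have -> : Nw%:R * x = 2 * pi * (z1 - z2)%:~R by rewrite /x intrB -e1 -e2; field.
  exact: cexpi_int.
Qed.
Lemma mder_sum {R : realType} {m p n} {F : 'I_n -> R -> 'M[R[i]]_(m, p)} {t} {DF : 'I_n -> 'M[R[i]]_(m, p)} :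
  (forall i, mder (F i) t (DF i)) ->
  mder (fun s => \sum_(i < n) F i s) t (\sum_(i < n) DF i).
Proof.
move=> H a b.
refine (cder_ext (cder_sum (fun i => H i a b)) _ _).
  by apply/funext => s; rewrite summxE.
by rewrite summxE.
Qed.

Lemma geomR {T : pzRingType} (z : T) N : (1 - z) * \sum_(j < N) z ^+ j = 1 - z ^+ N.
Proof.
elim: N => [|N IH]; first by rewrite big_ord0 mulr0 expr0 subrr.
by rewrite big_ord_recr /= mulrDr IH mulrBl mul1r -exprS addrA subrK.
Qed.

Lemma ord1_mder {R : realType} {m} (F : R -> 'M[R[i]]_(m, 1)) t (D : 'M[R[i]]_(m, 1)) :
  (forall a, has_cderiv (fun s => F s a 0) t (D a 0)) -> mder F t D.
Proof. by move=> H a b; rewrite (ord1 b). Qed.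

Lemma ord1_mcont {R : realType} {m} (F : R -> 'M[R[i]]_(m, 1)) D :
  (forall a, ccont_on D (fun s => F s a 0)) -> mcont D F.
Proof. by move=> H a b; rewrite (ord1 b). Qed.
Theorem mainTheorem1 (R : realType) (Nx Nw : nat) (dt : R)
  (A : 'M[R[i]]_Nx) (q0 : 'cV[R[i]]_Nx) (ghat : nat -> 'cV[R[i]]_Nx)
  (q : R -> 'cV[R[i]]_Nx) (k : nat) :
  (1 <= Nx)%N -> (1 <= Nw)%N -> 0 < dt ->
  let T := Nw%:R * dt in
  let t (j : nat) : R := j%:R * dt in
  let w (l : nat) : R := omega Nw T l in
  let g (s : R) : 'cV[R[i]]_Nx :=
    (Nw%:R)^-1 *: \sum_(l < Nw) (cexpi (w l * s) *: ghat l) in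
  (* q solves dq/dt = A q + g(t) on [0,T], q(0) = q0 *)
  q 0 = q0 ->
  (forall a : 'I_Nx, ccont_on `[0, T] (fun s => q s a 0)) ->
  (forall s, 0 < s < T -> forall a : 'I_Nx,
      has_cderiv (fun s' => q s' a 0) s ((A *m q s + g s) a 0)) ->
  (forall l : 'I_Nw, ((0 +i* w l)%:M - A) \in unitmx) ->
  let Rl (l : nat) : 'M[R[i]]_Nx := invmx ((0 +i* w l)%:M - A) in
  (k < Nw)%N ->
  (1%:M - expmx ((dt%:C) *: (A - (0 +i* w k)%:M))) \in unitmx ->
  \sum_(j < Nw) (cexpi (- (w k * t j)) *: q (t j)) =
    Rl k *m ghat k +
    invmx (1%:M - expmx ((dt%:C) *: (A - (0 +i* w k)%:M)))
      *m (1%:M - expmx (T%:C *: A))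
      *m (q0 - (Nw%:R)^-1 *: \sum_(l < Nw) (Rl l *m ghat l)).
Proof.
move=> hNx hNw hdt T t w g hq0 hcont hder hinv Rl hk hunit.
pose v (l : nat) := Rl l *m ghat l.
pose p (s : R) : 'cV[R[i]]_Nx := (Nw%:R)^-1 *: \sum_(l < Nw) (cexpi (w l * s) *: v l).
have hv : forall l : 'I_Nw, (0 +i* w l) *: v l = A *m v l + ghat l.
  move=> l; have := mulmxV (hinv l); rewrite -/(Rl l) => e.
  rewrite /v -[X in _ = _ + X]mul1mx -e -mulmxA mulmxBl mul_scalar_mx addrC subrK.
  by [].
have hp : forall s, mder p s (A *m p s + g s).
  move=> s.
  refine (mder_ext (mderZ (cder_cst ((Nw%:R)^-1) s)
     (mder_sum (fun l => mderZ (cder_cexpi (w l) s) (mder_cst (v l) s)))) _ _).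
    by [].
  rewrite scale0r add0r /p /g -scalemxAr -scalerDr mulmx_sumr -big_split /=.
  congr (_ *: _); apply: eq_bigr => l _.
  by rewrite scaler0 addr0 mulrC -scalerA hv -scalemxAr scalerDr.
have hq : forall s, 0 < s < T -> mder q s (A *m q s + g s).
  move=> s hs; apply: ord1_mder => a; exact: hder.
have hcq : mcont `[0, T] q by apply: ord1_mcont.
pose u s := q s - p s.
have hu : forall s, 0 < s < T -> mder u s (A *m u s).
  move=> s hs; refine (mder_ext (mderD (hq s hs) (mderN (hp s))) _ _); first by [].
  by rewrite mulmxBr opprD addrACA subrr addr0.
have hcu : mcont `[0, T] u := mcontD hcq (mcontN (mder_cont _ p _ hp)).
have hT : 0 < T by rewrite /T mulr_gt0 // ltr0n.
have husol : forall s, 0 <= s -> s <= T -> u s = expmx ((s - 0)%:C *: A) *m u 0.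
  move=> s h1 h2; exact: (ode_uniq A u 0 T s h1 h2 hu hcu).
have hu0 : u 0 = q0 - (Nw%:R)^-1 *: \sum_(l < Nw) (Rl l *m ghat l).
  rewrite /u /p hq0; congr (_ - _ *: _); apply: eq_bigr => l _.
  by rewrite mulr0 cexpi0 scale1r.
pose B := A - (0 +i* w k)%:M.
have hB : forall s, 0 <= s -> cexpi (- (w k * s)) *: expmx (s%:C *: A) = expmx (s%:C *: B).
  move=> s s0.
  pose Y := fun s => cexpi (- w k * s) *: expmx ((s - 0)%:C *: A).
  have hY : forall s, mder Y s (B *m Y s).
    move=> s'; refine (mder_ext (mderZ (cder_cexpi (- w k) s') (mder_exp A 0 s')) _ _); first by [].
    rewrite /Y; move: (expmx ((s' - 0)%:C *: A)) => E; move: (cexpi (- w k * s')) => e.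
    have -> : (0 +i* - w k) = - (0 +i* w k) by apply/eqP; rewrite eq_complex /= oppr0 !eqxx.
    rewrite -scalemxAr /B mulmxBl mul_scalar_mx scalerBr scalerA mulNr scaleNr mulrC addrC.
    by [].
  have hs1 : s <= s + 1 by lra.
  have := ode_uniq B Y 0 (s + 1) s s0 hs1 (fun s' _ => hY s') (mder_cont _ Y _ hY).
  rewrite /Y !subr0 (expmx0 A) mulr0 cexpi0 scale1r mulmx1 mulNr => ->.
  by [].
pose F := expmx (dt%:C *: B).
have hF : forall j : nat, expmx ((j%:R * dt)%:C *: B) = F ^+ j.
  elim=> [|j IH].
    have -> : (0%:R * dt : R) = 0 by rewrite mul0r.
    rewrite (expmx0 B) expr0; reflexivity.
  have h2 : j%:R * dt <= j.+1%:R * dt by apply: ler_wpM2r; [exact: ltW | rewrite ler_nat].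
  have := ode_uniq B (fun s => expmx ((s - 0)%:C *: B)) (j%:R * dt) (j.+1%:R * dt) (j.+1%:R * dt)
     h2 (lexx _) (fun s _ => mder_exp B 0 s) (mder_cont _ _ _ (mder_exp B 0)).
  rewrite !subr0 => ->.
  have -> : j.+1%:R * dt - j%:R * dt = dt by rewrite -natr1; ring.
  rewrite IH exprS mulmxE /F; reflexivity.
have hqt : forall j : 'I_Nw, q (t j) = p (t j) + expmx ((t j)%:C *: A) *m u 0.
  move=> j.
  have h1 : 0 <= t j by apply: mulr_ge0; [exact: ler0n | exact: ltW].
  have h2 : t j <= T by apply: ler_wpM2r; [exact: ltW | rewrite ler_nat; exact: ltnW].
  have := husol (t j) h1 h2; rewrite subr0 => <-.
  rewrite /u addrC subrK; reflexivity.
have first : \sum_(j < Nw) cexpi (- (w k * t j)) *: p (t j) = v k.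
  rewrite /p.
  under eq_bigr do rewrite scalerA mulrC -scalerA scaler_sumr.
  rewrite -scaler_sumr exchange_big /=.
  under eq_bigr => l _.
    under eq_bigr do rewrite scalerA.
    rewrite -scaler_suml (root_sum Nw dt l k (ltn_ord l) hk hdt).
    over.
  rewrite (bigD1 (Ordinal hk) isT) /= eqxx big1 ?addr0.
    rewrite scalerA mulVf; last by rewrite pnatr_eq0 -lt0n.
    by rewrite scale1r.
  move=> l hl; have -> : ((l : nat) == k) = false.
    by apply/negbTE; move: hl; apply: contra => /eqP e; apply/eqP/val_inj.
  by rewrite scale0r.
have second : forall j : 'I_Nw,
    cexpi (- (w k * t j)) *: (expmx ((t j)%:C *: A) *m u 0) = F ^+ j *m u 0.
  move=> j; have h1 : 0 <= t j by apply: mulr_ge0; [exact: ler0n | exact: ltW].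
  rewrite scalemxAl (hB (t j) h1) (hF j); reflexivity.
have hTA : expmx (T%:C *: A) = F ^+ Nw.
  have [z [ez _]] := @mm_cases R Nw k hk.
  have hT0 : T != 0 by rewrite gt_eqF.
  have e1 : w k * T = 2 * pi * z%:~R by rewrite /w /omega -/(mm Nw k) ez; field.
  have e2 : cexpi (- (w k * T)) = 1 by rewrite e1 -mulrN -intrN cexpi_int.
  have := hB T (ltW hT); rewrite e2 scale1r => ->.
  exact: (hF Nw).
rewrite (eq_bigr (fun j : 'I_Nw => cexpi (- (w k * t j)) *: p (t j) + F ^+ j *m u 0)); last first.
  move=> j _; rewrite hqt scalerDr second; reflexivity.
rewrite big_split /= first -mulmx_suml hu0.
congr (_ + _).
have hg : (1%:M - F) *m (\sum_(j < Nw) F ^+ j) = 1%:M - F ^+ Nw.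
  rewrite mulmxE; exact: geomR.
rewrite hTA -hg mulmxA (mulVmx hunit) mul1mx; reflexivity.
Qed.
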